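(* Let $C$ be a Plotkin-optimal projective linear code over $\mathbb{Z}_4$ of type $4^{k_1}2^{k_2}$ with exactly two nonzero Lee weights, and let $\Phi(C)\subseteq\mathbb{F}_2^{2n}$ be its Gray image. Then there is an integer $t$ with $1\le t\le k_1$ such that $\Phi(C)$ is a binary code of length $2^{2k_1+k_2}-2^{2k_1+k_2-t}$ with $2^{2k_1+k_2}$ codewords, whose nonzero Hamming weights are exactly $w_1=2^{2k_1+k_2-1}-2^{2k_1+k_2-t-1}$ and $w_2=2^{2k_1+k_2-1}$, occurring $2^{2k_1+k_2}-2^t$ and $2^t-1$ times respectively. In particular, these are the parameters and weight distribution of a binary two-weight linear code of type SU1 in the sense of Calderbank and Kantor, i.e. with $q=2$, dimension $l=2k_1+k_2$, length $\frac{q^l-q^m}{q-1}$, weights $q^{l-1}-q^{m-1}$ and $q^{l-1}$ with frequencies $q^l-q^{l-m}$ and $q^{l-m}-1$, where $m=2k_1+k_2-t$.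
   Context: A linear code of length $n$ over $\mathbb{Z}_4$ is a $\mathbb{Z}_4$-submodule of $\mathbb{Z}_4^n$, of type $4^{k_1}2^{k_2}$ if isomorphic to $\mathbb{Z}_4^{k_1}\times\mathbb{Z}_2^{k_2}$. Lee weight: $w_L(0)=0,w_L(1)=1,w_L(2)=2,w_L(3)=1$, additive on vectors; $d_L(C)$ is the minimum nonzero Lee weight. $C$ is Plotkin-optimal if $d_L(C)=\lfloor\frac{|C|}{|C|-1}n\rfloor$; $C$ is projective if $d_L(C^\perp)\ge3$ where the dual is with respect to $\sum x_iy_i\in\mathbb{Z}_4$. The Gray map $\phi:\mathbb{Z}_4\to\mathbb{F}_2^2$ is $\phi(0)=(0,0),\phi(1)=(0,1),\phi(2)=(1,1),\phi(3)=(1,0)$, and $\Phi:\mathbb{Z}_4^n\to\mathbb{F}_2^{2n}$ applies $\phi$ coordinatewise; it maps Lee weight to Hamming weight. *)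

(* Defs.v *)
From HB Require Import structures.
From mathcomp Require Import all_boot all_order all_algebra.
Set Implicit Arguments. Unset Strict Implicit. Unset Printing Implicit Defensive.
Import GRing.Theory.
Local Open Scope ring_scope.

(* A linear code over Z4 of length n: a Z4-submodule of Z4^n
   (for Z4, submodule = additive subgroup). *)
Definition Z4_linear (n : nat) (C : {set 'rV['Z_4]_n}) : Prop :=
  0 \in C /\ (forall x y, x \in C -> y \in C -> x - y \in C).

(* C has type 4^k1 2^k2: C is isomorphic (as a Z4-module, i.e. as an abelian
   group) to Z4^k1 x Z2^k2. *)
Definition Z4_type (n k1 k2 : nat) (C : {set 'rV['Z_4]_n}) : Prop :=
  exists f : 'rV['Z_4]_k1 * 'rV['Z_2]_k2 -> 'rV['Z_4]_n,
    [/\ (forall a b, f (a.1 + b.1, a.2 + b.2) = f a + f b),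
        injective f &
        (forall x, x \in C <-> exists a, f a = x)].

Definition leeZ4 (x : 'Z_4) : nat :=
  match val x with 0 => 0 | 1 => 1 | 2 => 2 | _ => 1 end%N.

Definition wL (n : nat) (v : 'rV['Z_4]_n) : nat := (\sum_(i < n) leeZ4 (v ord0 i))%N.

(* Minimum nonzero Lee weight (the default 2n is an upper bound for all Lee
   weights; it only matters if C has no nonzero codeword). *)
Definition dL (n : nat) (C : {set 'rV['Z_4]_n}) : nat :=
  \big[minn/(2 * n)%N]_(c in C | c != 0) wL c.

Definition plotkin_optimal (n : nat) (C : {set 'rV['Z_4]_n}) : Prop :=
  dL C = ((#|C| * n) %/ (#|C| - 1))%N.

Definition dual (n : nat) (C : {set 'rV['Z_4]_n}) : {set 'rV['Z_4]_n} :=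
  [set y : 'rV['Z_4]_n | [forall x in C, (\sum_(i < n) x ord0 i * y ord0 i == 0)]].

(* Projective: d_L(C^perp) >= 3, i.e. every nonzero dual codeword has Lee
   weight at least 3 (minimum over the empty set read as +infinity). *)
Definition projective (n : nat) (C : {set 'rV['Z_4]_n}) : Prop :=
  forall y, y \in dual C -> y != 0 -> (3 <= wL y)%N.

Definition two_lee_weights (n : nat) (C : {set 'rV['Z_4]_n}) : Prop :=
  exists w1 w2 : nat, [/\ w1 <> w2,
    (exists c, [/\ c \in C, c != 0 & wL c = w1]),
    (exists c, [/\ c \in C, c != 0 & wL c = w2]) &
    (forall c, c \in C -> c != 0 -> wL c = w1 \/ wL c = w2)].

(* Gray map phi : Z4 -> F2^2, phi(0)=00, phi(1)=01, phi(2)=11, phi(3)=10.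
   A binary word of length 2n is indexed by 'I_n * bool: coordinate (i,false)
   is the first bit of phi(v_i), (i,true) the second. *)
Definition gray_bit (x : 'Z_4) (b : bool) : bool :=
  match val x with
  | 0 => false
  | 1 => b
  | 2 => true
  | _ => ~~ b
  end%N.

Definition Gray (n : nat) (v : 'rV['Z_4]_n) : {ffun 'I_n * bool -> bool} :=
  [ffun p => gray_bit (v ord0 p.1) p.2].

Definition GrayImage (n : nat) (C : {set 'rV['Z_4]_n}) :
  {set {ffun 'I_n * bool -> bool}} := [set Gray c | c in C].

Definition wH (n : nat) (x : {ffun 'I_n * bool -> bool}) : nat := #|[set p | x p]|.

(* Main.v *)
Require Import Defs.
From mathcomp Require Import all_boot all_order all_algebra.
From mathcomp Require Import all_field.
From mathcomp Require Import zify ring.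
Import GRing.Theory Num.Theory.
Local Open Scope ring_scope.
Set Implicit Arguments. Unset Strict Implicit. Unset Printing Implicit Defensive.
Lemma z4cases (P : 'Z_4 -> Prop) : P 0 -> P 1 -> P 2 -> P 3 -> forall a, P a.
Proof.
move=> h0 h1 h2 h3 [[|[|[|[|m]]]] Hm] //.
- by rewrite (_ : Ordinal Hm = 0) //; apply: val_inj.
- by rewrite (_ : Ordinal Hm = 1) //; apply: val_inj.
- by rewrite (_ : Ordinal Hm = 2) //; apply: val_inj.
- by rewrite (_ : Ordinal Hm = 3) //; apply: val_inj.
Qed.
Lemma lee_tri (a b : 'Z_4) : (leeZ4 (a + b)%R <= leeZ4 a + leeZ4 b)%N.
Proof. by elim/z4cases: a; elim/z4cases: b. Qed.
Lemma lee0 (a : 'Z_4) : (leeZ4 a == 0)%N = (a == 0).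
Proof. by elim/z4cases: a. Qed.
Lemma gray_inj1 (a b : 'Z_4) : gray_bit a false = gray_bit b false -> gray_bit a true = gray_bit b true -> a = b.
Proof. by elim/z4cases: a; elim/z4cases: b. Qed.
Lemma z2dbl (a : 'Z_2) : a + a = 0.
Proof. case: a => [[|[|m]] Hm] //; apply: val_inj => //. Qed.
Definition chi (a : 'Z_4) : algC := 'i ^+ (val a).
Lemma i4 : ('i : algC) ^+ 4 = 1.
Proof. by rewrite (exprM _ 2 2) sqrCi expr2 mulrNN mulr1. Qed.
Lemma i3 : ('i : algC) ^+ 3 = - 'i.
Proof. by rewrite (exprS _ 2) sqrCi mulrN1. Qed.
Lemma chiD a b : chi (a + b) = chi a * chi b.
Proof. by rewrite /chi -exprD -(expr_mod _ i4). Qed.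
Lemma chi0 : chi 0 = 1.
Proof. by rewrite /chi expr0. Qed.
Lemma m1n1 : (-1 : algC) != 1.
Proof.
apply/eqP => h. have : (2%:R : algC) = 0 by rewrite -[2%N]/(1+1)%N natrD -{1}h addNr.
by move/eqP; rewrite pnatr_eq0.
Qed.
Lemma i_n1 : ('i : algC) != 1.
Proof. apply/eqP => h; move: (sqrCi algC); rewrite h expr1n => /esym/eqP. by rewrite (negPf m1n1). Qed.
Lemma i_nm1 : ('i : algC) != -1.
Proof. apply/eqP => h; move: (sqrCi algC); rewrite h sqrrN expr1n => /esym/eqP. by rewrite (negPf m1n1). Qed.
Lemma chi_eq1 a : chi a = 1 -> a = 0.
Proof.
elim/z4cases: a => //; rewrite /chi /=.
- by rewrite expr1 => /eqP; rewrite (negPf i_n1).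
- by rewrite sqrCi => /eqP; rewrite (negPf m1n1).
- by rewrite i3 => /eqP; rewrite eqr_oppLR (negPf i_nm1).
Qed.
Lemma chi_1 : chi 1 = 'i. Proof. exact: (expr1 'i). Qed.
Lemma chi_m1 : chi (-1) = -'i. Proof. exact: i3. Qed.
Lemma chi_2 : chi 2 = -1. Proof. exact: (sqrCi algC). Qed.
Lemma chi_m2 : chi (-2) = -1. Proof. exact: (sqrCi algC). Qed.
Lemma chi_3 : chi 3 = -'i. Proof. exact: i3. Qed.
Lemma chi_m3 : chi (-3) = 'i. Proof. exact: (expr1 'i). Qed.
Lemma chi_m0 : chi (-0) = 1. Proof. exact: chi0. Qed.
Lemma lee_0 : leeZ4 0 = 0%N. Proof. by []. Qed.
Lemma lee_1 : leeZ4 1 = 1%N. Proof. by []. Qed.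
Lemma lee_2 : leeZ4 2 = 2%N. Proof. by []. Qed.
Lemma lee_3 : leeZ4 3 = 1%N. Proof. by []. Qed.
Lemma lee_m1 : leeZ4 (-1) = 1%N. Proof. by []. Qed.
Lemma gval a : chi a + chi (- a) = 2%:R - 2%:R * (leeZ4 a)%:R.
Proof.
elim/z4cases: a; rewrite ?chi0 ?chi_m0 ?chi_1 ?chi_m1 ?chi_2 ?chi_m2 ?chi_3 ?chi_m3 ?lee_0 ?lee_1 ?lee_2 ?lee_3; ring.
Qed.
Lemma chi_dbl0 : chi (0 * 2) = 1. Proof. exact: chi0. Qed.
Lemma chi_dbl1 : chi (1 * 2) = -1. Proof. exact: chi_2. Qed.
Lemma chi_dbl2 : chi (2 * 2) = 1. Proof. exact: chi0. Qed.
Lemma chi_dbl3 : chi (3 * 2) = -1. Proof. exact: chi_2. Qed.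
Lemma lee_dbl0 : leeZ4 (0 + 0) = 0%N. Proof. by []. Qed.
Lemma lee_dbl1 : leeZ4 (1 + 1) = 2%N. Proof. by []. Qed.
Lemma lee_dbl2 : leeZ4 (2 + 2) = 0%N. Proof. by []. Qed.
Lemma lee_dbl3 : leeZ4 (3 + 3) = 2%N. Proof. by []. Qed.
Lemma dval a : (leeZ4 (a + a))%:R = 1 - chi (a * 2) :> algC.
Proof.
elim/z4cases: a; rewrite ?chi_dbl0 ?chi_dbl1 ?chi_dbl2 ?chi_dbl3 ?lee_dbl0 ?lee_dbl1 ?lee_dbl2 ?lee_dbl3; ring.
Qed.

Definition dot n (c y : 'rV['Z_4]_n) : 'Z_4 := \sum_(i < n) c ord0 i * y ord0 i.

Lemma dotDl n (c u y : 'rV['Z_4]_n) : dot (c + u) y = dot c y + dot u y.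
Proof. by rewrite /dot -big_split; apply: eq_bigr => i _; rewrite mxE mulrDl. Qed.

Lemma dotDr n (c y z : 'rV['Z_4]_n) : dot c (y + z) = dot c y + dot c z.
Proof. by rewrite /dot -big_split; apply: eq_bigr => i _; rewrite mxE mulrDr. Qed.

Lemma linN n (C : {set 'rV['Z_4]_n}) u : Z4_linear C -> u \in C -> - u \in C.
Proof. by case=> h0 hB uC; rewrite -sub0r hB. Qed.

Lemma linD n (C : {set 'rV['Z_4]_n}) u v : Z4_linear C -> u \in C -> v \in C -> u + v \in C.
Proof. move=> HC uC vC; rewrite -[v]opprK; have [_ hB] := HC; apply: hB => //; exact: linN. Qed.

Lemma charsum n (C : {set 'rV['Z_4]_n}) y : Z4_linear C ->
  \sum_(c in C) chi (dot c y) = if y \in dual C then (#|C|)%:R else 0.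
Proof.
move=> HC; case: ifP => Hy.
  transitivity (\sum_(c in C) (1 : algC)); last by rewrite sumr_const.
  apply: eq_bigr => c cC; move: Hy; rewrite inE => /forallP/(_ c).
  by rewrite cC /= => /eqP h; rewrite /dot h chi0.
have [u uC hu] : exists2 u, u \in C & dot u y != 0.
  move/negbT: Hy; rewrite inE negb_forall => /existsP [u].
  by rewrite negb_imply => /andP[uC hu]; exists u.
set S := LHS.
have HS : S = S * chi (dot u y).
  rewrite /S mulr_suml (reindex_inj (addIr u)) /=.
  apply: eq_big => [c|c _]; last by rewrite dotDl chiD.
  apply/idP/idP => h; last exact: linD.
  by rewrite -(addrK u c); case: HC => _ hB; apply: hB.
have : S * (1 - chi (dot u y)) = 0 by rewrite mulrBr mulr1 -HS subrr.
move/eqP; rewrite mulf_eq0 => /orP[/eqP //|].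
rewrite subr_eq0 => /eqP/esym/chi_eq1 h; by rewrite h eqxx in hu.
Qed.

Lemma charsum0 n (C : {set 'rV['Z_4]_n}) y : Z4_linear C -> projective C ->
  y != 0 -> (wL y <= 2)%N -> \sum_(c in C) chi (dot c y) = 0.
Proof.
move=> HC HP y0 wy; rewrite charsum //; case: ifP => // Hy.
by have := HP y Hy y0; rewrite leqNgt ltnS wy.
Qed.

Definition ev n (j : 'I_n) (s : 'Z_4) : 'rV['Z_4]_n := \row_i (if i == j then s else 0).

Lemma dot_ev n (c : 'rV['Z_4]_n) j s : dot c (ev j s) = c ord0 j * s.
Proof.
rewrite /dot (bigD1 j) //= big1 => [|i /negPf nij]; rewrite !mxE ?eqxx ?nij ?mulr0 ?addr0 //.
Qed.

Lemma wL_ev n (j : 'I_n) s : wL (ev j s) = leeZ4 s.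
Proof.
rewrite /wL (bigD1 j) //= big1 => [|i /negPf nij]; rewrite !mxE ?eqxx ?nij ?addn0 //.
Qed.

Lemma wL_tri n (x y : 'rV['Z_4]_n) : (wL (x + y) <= wL x + wL y)%N.
Proof. rewrite /wL -big_split /=; apply: leq_sum => i _; rewrite mxE; exact: lee_tri. Qed.

Lemma wL0 n : wL (0 : 'rV['Z_4]_n) = 0%N.
Proof. by rewrite /wL big1 // => i _; rewrite mxE. Qed.

Lemma wL_eq0 n (x : 'rV['Z_4]_n) : (wL x == 0)%N = (x == 0).
Proof.
apply/idP/idP => [|/eqP ->]; last by rewrite wL0.
rewrite /wL sum_nat_eq0 => /forallP h; apply/eqP/rowP => i.
by have := h i; rewrite /= lee0 mxE => /eqP.
Qed.

Lemma charsum_ent n (C : {set 'rV['Z_4]_n}) (y : 'rV['Z_4]_n) (j : 'I_n) : Z4_linear C -> projective C ->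
  y ord0 j != 0 -> (wL y <= 2)%N -> \sum_(c in C) chi (dot c y) = 0.
Proof.
move=> HC HP yj wy; apply: charsum0 => //; apply: contra yj => /eqP ->; by rewrite mxE.
Qed.

Lemma wL_ev2 n (j k : 'I_n) s t : (leeZ4 s <= 1)%N -> (leeZ4 t <= 1)%N ->
  (wL (ev j s + ev k t) <= 2)%N.
Proof.
move=> hs ht; apply: leq_trans (wL_tri _ _) _; rewrite !wL_ev.
by rewrite -[2%N]/(1 + 1)%N leq_add.
Qed.

Definition G n (c : 'rV['Z_4]_n) : algC := \sum_(j < n) (chi (c ord0 j) + chi (- c ord0 j)).

Lemma G_eq n (c : 'rV['Z_4]_n) : G c = 2%:R * n%:R - 2%:R * (wL c)%:R.
Proof.
rewrite /G (eq_bigr _ (fun j _ => gval _)) sumrB sumr_const card_ord -mulr_sumr.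
by rewrite /wL natr_sum mulr_natr.
Qed.

Lemma chi_ev n (c : 'rV['Z_4]_n) j : chi (c ord0 j) = chi (dot c (ev j 1)).
Proof. by rewrite dot_ev mulr1. Qed.
Lemma chi_evN n (c : 'rV['Z_4]_n) j : chi (- c ord0 j) = chi (dot c (ev j (-1))).
Proof. by rewrite dot_ev mulrN1. Qed.

Lemma sumG n (C : {set 'rV['Z_4]_n}) : Z4_linear C -> projective C ->
  \sum_(c in C) G c = 0.
Proof.
move=> HC HP; rewrite /G exchange_big /=; apply: big1 => j _; rewrite big_split /=.
rewrite (eq_bigr _ (fun c _ => chi_ev c j)) (eq_bigr _ (fun c _ => chi_evN c j)).
rewrite !(@charsum_ent _ _ _ j) ?addr0 // ?wL_ev ?mxE ?eqxx //.
Qed.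

Lemma ev_add0 n (j : 'I_n) : ev j 1 + ev j (-1) = 0.
Proof. by apply/rowP => i; rewrite !mxE; case: (i == j); rewrite ?addr0 ?subrr. Qed.
Lemma ev_add0' n (j : 'I_n) : ev j (-1) + ev j 1 = 0.
Proof. by rewrite addrC ev_add0. Qed.

Lemma zero_dual n (C : {set 'rV['Z_4]_n}) : 0 \in dual C.
Proof. rewrite inE; apply/forallP => c; apply/implyP => _; rewrite big1 // => i _; by rewrite mxE mulr0. Qed.

Lemma pairsum n (C : {set 'rV['Z_4]_n}) j k : Z4_linear C -> projective C ->
  \sum_(c in C) ((chi (c ord0 j) + chi (- c ord0 j)) * (chi (c ord0 k) + chi (- c ord0 k)))
  = if j == k then (#|C|)%:R *+ 2 else 0.
Proof.
move=> HC HP.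
have E (c : 'rV['Z_4]_n) : (chi (c ord0 j) + chi (- c ord0 j)) * (chi (c ord0 k) + chi (- c ord0 k)) =
   chi (dot c (ev j 1 + ev k 1)) + chi (dot c (ev j 1 + ev k (-1))) +
   chi (dot c (ev j (-1) + ev k 1)) + chi (dot c (ev j (-1) + ev k (-1))).
  rewrite !dotDr !dot_ev !chiD !mulr1 !mulrN1; ring.
rewrite (eq_bigr _ (fun c _ => E c)) !big_split /=.
have l1 : (leeZ4 (1%R : 'Z_4) <= 1)%N by []. have lm1 : (leeZ4 (-1 : 'Z_4)%R <= 1)%N by [].
case: eqP => [<-|/eqP njk].
  rewrite ev_add0 ev_add0' (charsum 0 HC) zero_dual.
  rewrite !(@charsum_ent _ _ _ j) ?wL_ev2 // ?mxE ?eqxx //.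
  by rewrite add0r addr0 mulr2n.
rewrite !(@charsum_ent _ _ _ j) ?wL_ev2 // ?mxE ?eqxx ?(negPf njk) ?addr0 ?add0r //.
Qed.

Lemma Gsq n (c : 'rV['Z_4]_n) : G c ^+ 2 =
  \sum_(j < n) \sum_(k < n) ((chi (c ord0 j) + chi (- c ord0 j)) * (chi (c ord0 k) + chi (- c ord0 k))).
Proof. by rewrite /G expr2 mulr_suml; apply: eq_bigr => j _; rewrite mulr_sumr. Qed.

Lemma sumG2 n (C : {set 'rV['Z_4]_n}) : Z4_linear C -> projective C ->
  \sum_(c in C) G c ^+ 2 = (#|C| * n)%:R *+ 2.
Proof.
move=> HC HP; rewrite (eq_bigr _ (fun c _ => Gsq c)) exchange_big /=.
rewrite (eq_bigr (fun j => (#|C|)%:R *+ 2)) => [|j _].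
  by rewrite sumr_const card_ord natrM mulrnAC mulr_natr.
rewrite exchange_big (eq_bigr _ (fun k _ => pairsum j k HC HP)).
by rewrite (bigD1 j) //= eqxx big1 ?addr0 // => k; rewrite eq_sym => /negPf ->.
Qed.

Lemma sumD2 n (C : {set 'rV['Z_4]_n}) : Z4_linear C -> projective C ->
  \sum_(c in C) (wL (c + c))%:R = (n * #|C|)%:R :> algC.
Proof.
move=> HC HP.
have E (c : 'rV['Z_4]_n) : (wL (c + c))%:R = \sum_(j < n) (1 - chi (dot c (ev j 2))) :> algC.
  rewrite /wL natr_sum; apply: eq_bigr => j _; by rewrite mxE dval dot_ev.
rewrite (eq_bigr _ (fun c _ => E c)) exchange_big /=.
rewrite (eq_bigr (fun j => (#|C|)%:R)) => [|j _].
  by rewrite sumr_const card_ord natrM mulr_natl.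
rewrite sumrB sumr_const (@charsum_ent _ _ _ j) ?subr0 //.
  by rewrite mxE eqxx.
by rewrite wL_ev.
Qed.

Lemma intr_nat' (m : nat) : ((m%:Z)%:~R : algC) = m%:R.
Proof. by []. Qed.

Lemma two_neq0 : (2%:R : algC) != 0.
Proof. by rewrite pnatr_eq0. Qed.

Lemma mom1 n (C : {set 'rV['Z_4]_n}) : Z4_linear C -> projective C ->
  (\sum_(c in C) wL c = n * #|C|)%N.
Proof.
move=> HC HP; have := sumG HC HP.
rewrite (eq_bigr _ (fun c _ => G_eq c)) sumrB !sumr_const -mulr_sumr -natr_sum.
move/eqP; rewrite subr_eq0 => /eqP h.
apply/eqP; rewrite -(eqr_nat algC); apply/eqP.
apply: (mulfI two_neq0); by rewrite -h natrM -mulrnAr mulr_natr.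
Qed.

Lemma mom2 n (C : {set 'rV['Z_4]_n}) : Z4_linear C -> projective C ->
  ((\sum_(c in C) ((n%:Z - (wL c)%:Z) ^+ 2)) * 2 = (#|C| * n)%:Z)%R.
Proof.
move=> HC HP; have := sumG2 HC HP.
rewrite (eq_bigr _ (fun c _ => congr1 (fun x => x ^+ 2) (G_eq c))) => h.
apply: (@intr_inj algC); rewrite rmorphM rmorph_sum /= intr_nat'.
apply: (mulfI two_neq0).
rewrite intr_nat' [RHS]mulrC [RHS]mulr_natr -h mulr_suml mulr_sumr; apply: eq_bigr => c _.
rewrite rmorphXn rmorphB /= !intr_nat'; ring.
Qed.

Lemma mom3 n (C : {set 'rV['Z_4]_n}) : Z4_linear C -> projective C ->
  (\sum_(c in C) wL (c + c) = n * #|C|)%N.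
Proof.
move=> HC HP; have := sumD2 HC HP; rewrite -natr_sum => /eqP.
by rewrite eqr_nat => /eqP.
Qed.

Lemma arith (k1 k2 n M A B Z0 Y1 Y2 w1 w2 : nat) :
  M = (2 ^ (2 * k1 + k2))%N -> (2 ^ (k1 + k2) <= Z0)%N ->
  (0 < A)%N -> (0 < B)%N -> (0 < w1)%N -> (w1 < w2)%N ->
  (1 + A + B = M)%N ->
  (A * w1 + B * w2 = n * M)%N ->
  ((2 * (n%:Z ^+ 2 + A%:Z * (n%:Z - w1%:Z) ^+ 2 + B%:Z * (n%:Z - w2%:Z) ^+ 2)) = (M * n)%:Z)%R ->
  (Z0 + Y1 + Y2 = M)%N ->
  (Y1 * w1 + Y2 * w2 = n * M)%N ->
  w1 = ((M * n) %/ (M - 1))%N ->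
  let K := (2 * k1 + k2)%N in
  exists t, (1 <= t <= k1)%N /\ [/\ w1 = (2 ^ (K - 1) - 2 ^ (K - t - 1))%N,
     w2 = (2 ^ (K - 1))%N, (2 * n = 2 ^ K - 2 ^ (K - t))%N,
     A = (2 ^ K - 2 ^ t)%N & B = (2 ^ t - 1)%N].
Proof.
move=> HM HZ A0 B0 w10 w12 E0 E1 E2 E3a E3b HP K.
have M3 : (3 <= M)%N by lia.
have n0 : (0 < n)%N.
  rewrite lt0n; apply/eqP => n0; move: E1; rewrite n0 mul0n.
  have : (0 < A * w1)%N by rewrite muln_gt0 A0.
  lia.
have n2 : (2 * n <= M)%N.
  have s1 : (0 <= A%:Z * (n%:Z - w1%:Z) ^+ 2)%R by apply: mulr_ge0 => //; apply: sqr_ge0.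
  have s2 : (0 <= B%:Z * (n%:Z - w2%:Z) ^+ 2)%R by apply: mulr_ge0 => //; apply: sqr_ge0.
  move: E2 s1 s2; set a := (A%:Z * _)%R; set b := (B%:Z * _)%R.
  rewrite GRing.expr2 => E2 s1 s2.
  have : (2 * n * n <= M * n)%N by lia.
  by rewrite leq_pmul2r.
have w1n : w1 = n.
  rewrite HP (_ : M * n = n * (M - 1) + n)%N; last first.
    by rewrite mulnBr muln1 mulnC subnK // leq_pmulr //; lia.
  by rewrite divnMDl ?divn_small ?addn0 //; lia.
clear HP; subst w1.
have e1 : (B * w2 = n + B * n)%N.
  move: E1; rewrite -E0 !mulnDr muln1 [(n * A)%N]mulnC [(n * B)%N]mulnC; lia.
have w2e : (2 * w2 = M)%N.
  have hb : (B%:Z * (w2%:Z - n%:Z) = n%:Z)%R by lia.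
  have e1' : (B%:Z * (n%:Z - w2%:Z) ^+ 2 = n%:Z * (w2%:Z - n%:Z))%R.
    transitivity ((B%:Z * (w2%:Z - n%:Z)) * (w2%:Z - n%:Z))%R; first by ring.
    by rewrite hb.
  move: E2; rewrite e1' GRing.subrr GRing.expr0n /= GRing.mulr0 GRing.addr0 GRing.expr2 => E2.
  have : ((2 * w2) * n = M * n)%N by lia.
  by move/eqP; rewrite eqn_pmul2r // => /eqP.
clear E2.
have K0 : (0 < K)%N.
  rewrite lt0n; apply/eqP => K0; move: HM; rewrite -/K K0 expn0; lia.
set K' := K.-1.
have KS : K = K'.+1 by rewrite /K' prednK.
set h := (2 ^ K')%N.
have Mh : M = (2 * h)%N by rewrite HM -/K KS expnS.
have w2h : w2 = h by lia.
subst w2.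
have e2 : (B * h = n * B.+1)%N by lia.
have : (B.+1 %| 2 ^ K')%N.
  rewrite -(Gauss_dvdr _ (coprimeSn B)) -/h e2; exact: dvdn_mull.
case/dvdn_pfactor => // t tle hBt.
set T := (2 ^ t)%N in hBt.
have t0 : (0 < t)%N.
  rewrite lt0n; apply/eqP => t0; move: hBt; rewrite /T t0 expn0; lia.
set P := (2 ^ (K' - t))%N.
have hP : h = (T * P)%N by rewrite /h /T /P -expnD subnKC.
have P0 : (0 < P)%N by rewrite expn_gt0.
have nBP : n = (B * P)%N.
  apply/eqP; rewrite -(eqn_pmul2r (ltn0Sn B)); apply/eqP; rewrite -e2 hP hBt; ring.
have Y2e : Y2 = (B * Z0)%N.
  have : (Y2 * P = (B * Z0) * P)%N.
    move: E3b E3a; rewrite Mh hP nBP -hBt => E3b E3a.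
    subst M; nia.
  by move/eqP; rewrite eqn_pmul2r // => /eqP.
have tk : (t <= k1)%N.
  have : (2 ^ (k1 + k2) * T <= 2 ^ (2 * k1 + k2))%N.
    rewrite -HM; apply: leq_trans (_ : Z0 * T <= M)%N.
      by rewrite leq_mul2r HZ orbT.
    by rewrite -hBt mulnS -E3a Y2e -addnA leq_add2l mulnC leq_addl.
  by rewrite /T -expnD leq_exp2l //; lia.
exists t; split; first by rewrite t0 tk.
have eK : (2 ^ K = 2 * (T * P))%N by rewrite KS expnS -hP.
have eKt : (2 ^ (K - t) = 2 * P)%N by rewrite KS subSn // expnS.
have eK1 : (2 ^ (K - 1) = T * P)%N by rewrite KS subn1 /= -hP.
have eKt1 : (2 ^ (K - t - 1) = P)%N by rewrite KS subSn // subn1.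
rewrite eK eKt eK1 eKt1 -/T -hP.
have nTP : n = (h - P)%N by rewrite hP nBP -hBt mulSn addKn.
split => //.
- by rewrite -mulnBr -nTP.
- by rewrite -Mh -E0 -hBt; lia.
- by rewrite -hBt subn1.
Qed.



Lemma card_Z4 : #|{: 'Z_4}| = 4%N. Proof. by rewrite card_ord. Qed.
Lemma card_Z2 : #|{: 'Z_2}| = 2%N. Proof. by rewrite card_ord. Qed.

Lemma cardC n k1 k2 (C : {set 'rV['Z_4]_n}) : Z4_type k1 k2 C ->
  #|C| = (2 ^ (2 * k1 + k2))%N.
Proof.
case=> f [fadd finj fC].
have -> : C = f @: setT.
  apply/setP => x; apply/idP/imsetP => [/fC [a <-]|[a _ ->]]; first by exists a.
  by apply/fC; exists a.
rewrite card_imset // cardsT card_prod !card_mx card_Z4 card_Z2 !mul1n.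
by rewrite expnD expnM.
Qed.

Lemma z2cases (P : 'Z_2 -> Prop) : P 0 -> P 1 -> forall a, P a.
Proof.
move=> h0 h1 [[|[|m]] Hm] //.
- by rewrite (_ : Ordinal Hm = 0) //; apply: val_inj.
- by rewrite (_ : Ordinal Hm = 1) //; apply: val_inj.
Qed.

Definition gz k (v : 'rV['Z_2]_k) : 'rV['Z_4]_k := \row_i (if v ord0 i == 0 then 0 else 2).

Lemma gz_inj k : injective (@gz k).
Proof.
move=> v w /rowP h; apply/rowP => i; have := h i; rewrite !mxE.
by move: (v ord0 i) (w ord0 i); elim/z2cases; elim/z2cases.
Qed.

Lemma Z0_bound n k1 k2 (C : {set 'rV['Z_4]_n}) : Z4_type k1 k2 C ->
  (2 ^ (k1 + k2) <= #|[set c in C | wL (c + c) == 0%N]|)%N.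
Proof.
case=> f [fadd finj fC].
have f0 : f (0, 0) = 0.
  apply: (addrI (f (0, 0))); rewrite -fadd /= !addr0 //.
set h := fun p : 'rV['Z_2]_k1 * 'rV['Z_2]_k2 => f (gz p.1, p.2).
have hinj : injective h.
  by move=> [v b] [w d] /finj [/gz_inj -> ->].
have <- : #|h @: setT| = (2 ^ (k1 + k2))%N.
  by rewrite card_imset // cardsT card_prod !card_mx card_Z2 !mul1n expnD.
apply: subset_leq_card; apply/subsetP => x /imsetP [[v b] _ ->].
rewrite inE; apply/andP; split; first by apply/fC; exists (gz v, b).
rewrite /h /= -fadd /=.
have -> : gz v + gz v = 0.
  apply/rowP => i; rewrite !mxE; case: (v ord0 i == 0); rewrite ?addr0 //; exact: val_inj.
have -> : b + b = 0 by apply/rowP => i; rewrite !mxE z2dbl.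
by rewrite f0 wL0.
Qed.



Lemma wH_Gray n (c : 'rV['Z_4]_n) : wH (Gray c) = wL c.
Proof.
rewrite /wH /wL -sum1_card.
rewrite (eq_bigl (fun p => Gray c p)); last by move=> p; rewrite inE.
rewrite big_mkcond /=.
transitivity (\sum_i \sum_b (if Gray c (i, b) then 1 else 0))%N.
  by rewrite pair_bigA; apply: eq_bigr => [[i b]] _.
apply: eq_bigr => i _; rewrite big_bool /= !ffunE /=.
by move: (c ord0 i) => a; elim/z4cases: a.
Qed.

Lemma Gray_inj n : injective (@Gray n).
Proof.
move=> c d h; apply/rowP => i; apply: gray_inj1.
  by have := congr1 (fun x : {ffun 'I_n * bool -> bool} => x (i, false)) h; rewrite !ffunE.
by have := congr1 (fun x : {ffun 'I_n * bool -> bool} => x (i, true)) h; rewrite !ffunE.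
Qed.

Lemma gray_count n (C : {set 'rV['Z_4]_n}) w :
  #|[set x in GrayImage C | wH x == w]| = #|[set c in C | wL c == w]|.
Proof.
rewrite -(card_imset _ (@Gray_inj n)); apply: eq_card => x; rewrite [in LHS]inE.
apply/andP/imsetP => [[/imsetP [c cC ->] hw]|[c]].
  by exists c; rewrite // inE cC -wH_Gray.
rewrite inE => /andP [cC hw] ->; split; last by rewrite wH_Gray.
by apply/imsetP; exists c.
Qed.

Lemma wdist (T : finType) (C : {set T}) (h : T -> nat) (w1 w2 : nat) (F : nat -> int) :
  (0 < w1)%N -> (0 < w2)%N -> w1 != w2 ->
  (forall c, c \in C -> [\/ h c = 0%N, h c = w1 | h c = w2]) ->
  \sum_(c in C) F (h c) = F 0%N *+ #|[set c in C | h c == 0%N]|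
     + F w1 *+ #|[set c in C | h c == w1]| + F w2 *+ #|[set c in C | h c == w2]|.
Proof.
move=> w10 w20 w12 H.
have E w : F w *+ #|[set c in C | h c == w]| = \sum_(c in C) (if h c == w then F w else 0).
  rewrite -sumr_const -big_mkcondr /=; apply: eq_bigl => c; by rewrite !inE.
rewrite !E -!big_split /=; apply: eq_bigr => c cC.
have n01 : (0 == w1)%N = false by lia.
have n02 : (0 == w2)%N = false by lia.
have n12 : (w1 == w2) = false by apply/negbTE.
have n21 : (w2 == w1) = false by rewrite eq_sym n12.
have n10 : (w1 == 0)%N = false by lia.
have n20 : (w2 == 0)%N = false by lia.
case: (H c cC) => ->; rewrite eqxx ?n01 ?n02 ?n12 ?n21 ?n10 ?n20 ?addr0 ?add0r //.
Qed.

Lemma lee_le2 (a : 'Z_4) : (leeZ4 a <= 2)%N.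
Proof. by elim/z4cases: a. Qed.

Lemma wL_le n (c : 'rV['Z_4]_n) : (wL c <= 2 * n)%N.
Proof.
rewrite /wL; apply: (@leq_trans (\sum_(i < n) 2)%N); first by apply: leq_sum => i _; exact: lee_le2.
by rewrite sum_nat_const card_ord mulnC.
Qed.

Lemma bigmin_le (I : eqType) (r : seq I) (P : pred I) (F : I -> nat) x0 i :
  i \in r -> P i -> (\big[minn/x0]_(j <- r | P j) F j <= F i)%N.
Proof.
elim: r => // a r IH; rewrite inE big_cons => /orP [/eqP <-|ir] Pi.
  by rewrite Pi geq_minl.
case: (P a); last exact: IH.
exact: leq_trans (geq_minr _ _) (IH ir Pi).
Qed.

Lemma dL_two n (C : {set 'rV['Z_4]_n}) w1 w2 :
  (exists c, [/\ c \in C, c != 0 & wL c = w1]) ->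
  (exists c, [/\ c \in C, c != 0 & wL c = w2]) ->
  (forall c, c \in C -> c != 0 -> wL c = w1 \/ wL c = w2) ->
  dL C = minn w1 w2.
Proof.
move=> [c1 [c1C c10 e1]] [c2 [c2C c20 e2]] H.
apply/eqP; rewrite eqn_leq; apply/andP; split.
  rewrite leq_min; apply/andP; split.
    by rewrite -e1; apply: bigmin_le; [exact: mem_index_enum | rewrite c1C c10].
  by rewrite -e2; apply: bigmin_le; [exact: mem_index_enum | rewrite c2C c20].
rewrite /dL; apply: (big_ind (fun x => minn w1 w2 <= x)%N).
- by apply: leq_trans (geq_minl _ _) _; rewrite -e1 wL_le.
- by move=> x y hx hy; rewrite leq_min hx hy.
- move=> c /andP [cC c0]; case: (H c cC c0) => ->; [exact: geq_minl | exact: geq_minr].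
Qed.



Lemma sumPosz (T : finType) (C : {set T}) (F : T -> nat) :
  (\sum_(c in C) (F c)%:Z)%R = (\sum_(c in C) F c)%N.
Proof. by rewrite (big_morph Posz PoszD (erefl 0%:Z)). Qed.

Lemma mulrn_int (x : int) k : x *+ k = x * k%:Z.
Proof. by rewrite -[in LHS]mulr_natr natz. Qed.


Lemma main_aux (n k1 k2 : nat) (C : {set 'rV['Z_4]_n}) :
  Z4_linear C -> Z4_type k1 k2 C -> plotkin_optimal C -> projective C ->
  two_lee_weights C ->
  let K := (2 * k1 + k2)%N in
  exists t : nat,
    (1 <= t <= k1)%N /\
    [/\ (2 * n)%N = (2 ^ K - 2 ^ (K - t))%N,
        #|GrayImage C| = (2 ^ K)%N,
        (forall x, x \in GrayImage C -> (0 < wH x)%N ->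
           wH x = (2 ^ (K - 1) - 2 ^ (K - t - 1))%N \/ wH x = (2 ^ (K - 1))%N),
        #|[set x in GrayImage C | wH x == (2 ^ (K - 1) - 2 ^ (K - t - 1))%N]|
          = (2 ^ K - 2 ^ t)%N &
        #|[set x in GrayImage C | wH x == (2 ^ (K - 1))%N]| = (2 ^ t - 1)%N].
Proof.
move=> HC HT HPl HP [w1 [w2 [w12 ex1 ex2 Hw]]] K.
wlog lt12 : w1 w2 w12 ex1 ex2 Hw / (w1 < w2)%N.
  move=> IH; case: (ltngtP w1 w2) => [lt|gt|eq]; first exact: (IH w1 w2).
    apply: (IH w2 w1) => //; first by move=> e; apply: w12.
    by move=> c cC c0; case: (Hw c cC c0); [right | left].
  by [].
have [c1 [c1C c10 e1]] := ex1.
have [c2 [c2C c20 e2]] := ex2.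
have w10 : (0 < w1)%N by rewrite -e1 lt0n wL_eq0.
have w20 : (0 < w2)%N by rewrite -e2 lt0n wL_eq0.
have w12' : w1 != w2 by apply/eqP.
have HM := cardC HT.
have C0 : 0 \in C by case: HC.
have Hw1 : forall c, c \in C -> [\/ wL c = 0%N, wL c = w1 | wL c = w2].
  move=> c cC; case: (eqVneq c 0) => [->|c0]; first by rewrite wL0; constructor 1.
  by case: (Hw c cC c0) => ->; [constructor 2 | constructor 3].
have Hw2 : forall c, c \in C -> [\/ wL (c + c) = 0%N, wL (c + c) = w1 | wL (c + c) = w2].
  by move=> c cC; apply: Hw1; apply: linD.
have Z1 : #|[set c in C | wL c == 0%N]| = 1%N.
  have -> : [set c in C | wL c == 0%N] = [set 0 : 'rV['Z_4]_n]; last exact: cards1.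
  apply/setP => x.
  by rewrite !inE wL_eq0; case: eqP => [->|]; rewrite ?C0 ?andbF.
set A := #|[set c in C | wL c == w1]|.
set B := #|[set c in C | wL c == w2]|.
set Z0 := #|[set c in C | wL (c + c) == 0%N]|.
set Y1 := #|[set c in C | wL (c + c) == w1]|.
set Y2 := #|[set c in C | wL (c + c) == w2]|.
have E0 : (1 + A + B = #|C|)%N.
  have := wdist (fun _ => 1%:Z) w10 w20 w12' Hw1; rewrite sumr_const Z1 !mulrn_int.
  lia.
have E1 : (A * w1 + B * w2 = n * #|C|)%N.
  have := wdist (fun w => w%:Z) w10 w20 w12' Hw1; rewrite sumPosz mom1 // !mulrn_int.
  lia.
have E2 : ((2 * (n%:Z ^+ 2 + A%:Z * (n%:Z - w1%:Z) ^+ 2 + B%:Z * (n%:Z - w2%:Z) ^+ 2)) = (#|C| * n)%:Z)%R.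
  rewrite -(mom2 HC HP) (wdist (fun w => (n%:Z - w%:Z) ^+ 2) w10 w20 w12' Hw1) Z1 !mulrn_int.
  rewrite subr0; ring.
have E3a : (Z0 + Y1 + Y2 = #|C|)%N.
  have := wdist (fun _ => 1%:Z) w10 w20 w12' Hw2; rewrite sumr_const !mulrn_int.
  lia.
have E3b : (Y1 * w1 + Y2 * w2 = n * #|C|)%N.
  have := wdist (fun w => w%:Z) w10 w20 w12' Hw2; rewrite sumPosz mom3 // !mulrn_int.
  lia.
have HPl' : w1 = ((#|C| * n) %/ (#|C| - 1))%N.
  rewrite -HPl (dL_two ex1 ex2 Hw); exact/esym/minn_idPl/ltnW.
have A0 : (0 < A)%N by apply/card_gt0P; exists c1; rewrite inE c1C e1 eqxx.
have B0 : (0 < B)%N by apply/card_gt0P; exists c2; rewrite inE c2C e2 eqxx.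
have [t [ht [ew1 ew2 en eA eB]]] :=
  arith HM (Z0_bound HT) A0 B0 w10 lt12 E0 E1 E2 E3a E3b HPl'.
exists t; split => //; split.
- exact: en.
- by rewrite card_imset //; exact: Gray_inj.
- move=> x /imsetP [c cC ->]; rewrite wH_Gray lt0n wL_eq0 => c0.
  by rewrite -ew1 -ew2; case: (Hw c cC c0) => ->; [left | right].
- by rewrite -ew1 gray_count.
- by rewrite -ew2 gray_count.
Qed.

Local Close Scope ring_scope.
Unset Implicit Arguments.

Theorem mainTheorem3 (n k1 k2 : nat) (C : {set 'rV['Z_4]_n}) :
  Z4_linear C -> Z4_type k1 k2 C -> plotkin_optimal C -> projective C ->
  two_lee_weights C ->
  let K := (2 * k1 + k2)%N in
  exists t : nat,
    (1 <= t <= k1)%N /\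
    [/\ (2 * n)%N = (2 ^ K - 2 ^ (K - t))%N,
        #|GrayImage C| = (2 ^ K)%N,
        (forall x, x \in GrayImage C -> (0 < wH x)%N ->
           wH x = (2 ^ (K - 1) - 2 ^ (K - t - 1))%N \/ wH x = (2 ^ (K - 1))%N),
        #|[set x in GrayImage C | wH x == (2 ^ (K - 1) - 2 ^ (K - t - 1))%N]|
          = (2 ^ K - 2 ^ t)%N &
        #|[set x in GrayImage C | wH x == (2 ^ (K - 1))%N]| = (2 ^ t - 1)%N].
Proof. exact: main_aux. Qed.
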